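(* Suppose $n\in\mathbb N$ with $n\equiv1\pmod 4$. Then \[ \sum_{d\mid n}\left(\frac{-1}{d}\right)d^2+6\sum_{d\mid\frac n3}\left(\frac{-1}{d}\right)d^2>0 . \] Moreover, let $A(n)$ denote the $n$-th Fourier coefficient of \[ \mathcal E(z):=\sum_{\substack{n\ge1\\ n\equiv1\ (12)}}\sum_{d\mid n}\left(\tfrac{-1}{d}\right)d^2q^n-\frac12\sum_{\substack{n\ge1\\ n\equiv5\ (12)}}\sum_{d\mid n}\left(\tfrac{-1}{d}\right)d^2q^n-2\sum_{\substack{n\ge1\\ n\equiv 9\ (12)}}\Big(\sum_{d\mid n}\left(\tfrac{-1}{d}\right)d^2+6\sum_{d\mid \frac n3}\left(\tfrac{-1}{d}\right)d^2\Big)q^n . \] Then for every $n\in\mathbb N_0$, \[ \operatorname{sgn}(A(4n+1))=\begin{cases}1&\text{if } 3\mid n,\\ -1&\text{otherwise.}\end{cases} \]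
   Context: Sums are over positive divisors; a sum over $d\mid \frac n3$ is empty (zero) if $3\nmid n$. $\left(\frac{-1}{d}\right)$ is the Kronecker symbol. *)

(* Defs.v *)
From mathcomp Require Import all_boot all_order all_algebra.
Set Implicit Arguments. Unset Strict Implicit. Unset Printing Implicit Defensive.
Import Order.TTheory GRing.Theory Num.Theory.
Local Open Scope ring_scope.

(* Kronecker symbol (-1/d) for d : nat.  (-1/0) = 1 (|-1| = 1), (-1/2) = 1,
   and for odd d it is (-1)^((d-1)/2).  Hence (-1/d) = (-1/odd part of d). *)
Definition kron_m1 (d : nat) : int :=
  if d == 0%N then 1
  else let o := (d %/ 2 ^ logn 2 d)%N in
       if (o %% 4 == 1)%N then 1 else -1.

Definition sig_chi2 (m : nat) : int :=
  \sum_(d <- divisors m) kron_m1 d * (d%:Z) ^+ 2.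

Definition sig_chi2_3 (m : nat) : int :=
  if (3 %| m)%N then sig_chi2 (m %/ 3) else 0.

Definition coefA (n : nat) : rat :=
  if (n == 0)%N then 0
  else if (n %% 12 == 1)%N then (sig_chi2 n)%:~R
  else if (n %% 12 == 5)%N then - (1 / 2) * (sig_chi2 n)%:~R
  else if (n %% 12 == 9)%N then - 2 * (sig_chi2 n + 6 * sig_chi2_3 n)%:~R
  else 0.

(* Main.v *)
Require Import Defs.
From mathcomp Require Import all_boot all_order all_algebra.
From mathcomp Require Import zify ring lra.
Import Order.TTheory GRing.Theory Num.Theory.
Local Open Scope ring_scope.

Lemma kron_odd d : odd d -> kron_m1 d = if (d %% 4 == 1)%N then 1 else -1.
Proof.
move=> od; rewrite /kron_m1 logn_coprime ?coprime2n // expn0 divn1.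
by case: d od.
Qed.

Lemma kron_sq d : kron_m1 d * kron_m1 d = 1.
Proof. by rewrite /kron_m1; case: ifP => //; case: ifP. Qed.

Lemma kron_abs d (x : int) : 0 <= x -> - x <= kron_m1 d * x.
Proof.
move=> x0; rewrite /kron_m1; case: ifP => _; first lra.
case: ifP => _; lra.
Qed.

Lemma kron3 e : odd e -> kron_m1 (3 * e) = - kron_m1 e.
Proof.
move=> oe; have o3: odd (3 * e) by rewrite oddM oe.
rewrite !kron_odd //.
have : (e %% 2 = 1)%N by rewrite modn2 oe.
case: ifP => /eqP h1; case: ifP => /eqP h2 //; try lia.
Qed.

Lemma sum_sub_iota (h : nat -> rat) (s : seq nat) a b :
  uniq s -> (forall i, i \in s -> a <= i < b)%N -> (forall i, 0 <= h i) ->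
  \sum_(i <- s) h i <= \sum_(a <= i < b) h i.
Proof.
move=> us sab h0.
rewrite [X in _ <= X](bigID (fun i => i \in s)) /= -[X in _ <= X + _]big_filter.
have pe : perm_eq (filter (fun i => i \in s) (index_iota a b)) s.
  apply: uniq_perm => //; first by rewrite filter_uniq // iota_uniq.
  move=> x; rewrite mem_filter mem_iota; case xs: (x \in s) => //=.
  have /andP[h1 h2] := sab x xs; apply/andP; split; lia.

by rewrite (perm_big _ pe) lerDl sumr_ge0.

Qed.

Definition Rn (m : nat) : int := \sum_(d <- divisors m | d != m) (d%:Z)^+2.

Lemma tele N : \sum_(1 <= i < N.+1) (((i * i.+1)%:R : rat)^-1) = 1 - (N.+1%:R)^-1.
Proof.
elim: N => [|N IH]; first by rewrite big_geq // invr1 subrr.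
rewrite big_nat_recr //= IH natrM.
field.
have h : 0 <= N%:R :> rat by apply: ler0n.
by apply/andP; split; apply: lt0r_neq0; lra.
Qed.

Lemma div_facts m d : odd m -> d \in divisors m ->
  [/\ (0 < d)%N, (m = (m %/ d) * d)%N & (m %/ d = 2 * (m %/ d)./2 + 1)%N].
Proof.
move=> om; have m0 : (0 < m)%N by case: m om.
rewrite -dvdn_divisors // => dm.
have e := esym (divnK dm).
have d0 : (0 < d)%N by rewrite lt0n; apply/negP => /eqP d0; move: e; rewrite d0 muln0 => e0; rewrite e0 in m0.
have ok : odd (m %/ d) by move: om; rewrite {1}e oddM => /andP[].
split => //; have := odd_double_half (m %/ d); rewrite ok.
rewrite -muln2 /= => h; lia.
Qed.

Lemma intrn (n : nat) : ((n%:Z)%:~R : rat) = n%:R.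
Proof. by []. Qed.

Lemma R_bound m : odd m -> 4 * Rn m < (m%:Z)^+2.
Proof.
move=> om; have m0 : (0 < m)%N by case: m om.
rewrite -(ltr_int rat) /Rn rmorphM rmorphXn rmorph_sum /=.
pose phi := fun d => ((m %/ d)./2)%N.
pose h := fun i : nat => ((m^2)%N%:R : rat) * ((i * i.+1)%N%:R)^-1.
have step : forall d, d \in divisors m -> d != m ->
    4%:~R * ((d%:Z)^+2)%:~R <= h (phi d) /\ (1 <= phi d <= m)%N.
  move=> d dm dnm; have [d0 e1 e2] := div_facts _ _ om dm.
  have i0 : (1 <= phi d)%N.
    rewrite /phi; case E: (m %/ d)./2 => [|i] //.
    move: e2; rewrite E => e2; move: e1; rewrite e2 /= mul1n => e1.
    by move: dnm; rewrite -e1 eqxx.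
  split; last by rewrite i0 /=; rewrite /phi; nia.
  rewrite /h ler_pdivlMr ?ltr0n; last by rewrite muln_gt0; lia.
  have H : (4 * d^2 * (phi d * (phi d).+1) <= m^2)%N by rewrite /phi; nia.
  move: H; rewrite -(ler_nat rat) !natrM.
  rewrite rmorphXn /= !intrn expr2.
  by move=> H; exact: H.
have S1 : \sum_(d <- divisors m | d != m) h (phi d) <= \sum_(1 <= i < m.+1) h i.
  rewrite -big_filter -(big_map phi predT h); apply: sum_sub_iota.
  - rewrite map_inj_in_uniq ?filter_uniq ?divisors_uniq //.
    move=> x y; rewrite !mem_filter => /andP[_ xd] /andP[_ yd]; rewrite /phi => e.
    have [x0 ex fx] := div_facts _ _ om xd; have [y0 ey fy] := div_facts _ _ om yd.
    rewrite e in fx; nia.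
  - move=> i /mapP [d]; rewrite mem_filter => /andP[dm dd] ->.
    by have [_ /andP[h1 h2]] := step d dd dm; rewrite h1 ltnS h2.
  - move=> i; rewrite /h; apply: mulr_ge0; first exact: ler0n.
    by rewrite invr_ge0 ler0n.
have S2 : \sum_(1 <= i < m.+1) h i < ((m^2)%N%:R : rat).
  rewrite /h -mulr_sumr tele.
  have mp : 0 < ((m^2)%N%:R : rat) by rewrite ltr0n; nia.
  have ip : 0 < (m.+1%:R : rat)^-1 by rewrite invr_gt0 ltr0n.
  have := mulr_gt0 mp ip; rewrite mulrBr mulr1.
  by move=> H; rewrite ltrBlDr ltrDl.
rewrite mulr_sumr.
rewrite intrn -natrX; apply: le_lt_trans S2; apply: le_trans S1.
rewrite big_seq_cond [X in _ <= X]big_seq_cond; apply: ler_sum => d /andP[dm dd].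
by have [] := step d dm dd.
Qed.

Lemma kron_cases d : kron_m1 d = 1 \/ kron_m1 d = -1.
Proof. by rewrite /kron_m1; case: ifP => _; [left|case: ifP => _; [left|right]]. Qed.

Lemma Rn_ge0 m : 0 <= Rn m.
Proof. by apply: sumr_ge0 => i _; apply: exprn_ge0. Qed.

Lemma L2 m : odd m -> (m%:Z)^+2 - Rn m <= kron_m1 m * sig_chi2 m.
Proof.
move=> om; have m0 : (0 < m)%N by case: m om.
rewrite /sig_chi2 (bigD1_seq m) ?divisors_uniq -?dvdn_divisors //= mulrDr mulrA kron_sq mul1r lerD2l.
rewrite /Rn -sumrN mulr_sumr; apply: ler_sum => d _; rewrite mulrA.
have h0 : 0 <= (d%:Z)^+2 by apply: exprn_ge0.
by case: (kron_cases m) => ->; case: (kron_cases d) => ->; lra.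
Qed.

Lemma Ppos m : odd m -> (m %% 4 = 1)%N -> 0 < sig_chi2 m.
Proof.
move=> om m4; have := L2 _ om; have := R_bound _ om; have := Rn_ge0 m.
rewrite kron_odd // m4 /= mul1r; lra.
Qed.

Lemma Pneg m : odd m -> (m %% 4 = 3)%N -> (m%:Z)^+2 - Rn m <= - sig_chi2 m.
Proof.
move=> om m4; have := L2 _ om.
by rewrite kron_odd // m4 /= mulN1r.
Qed.

Lemma split3 k : (0 < k)%N ->
  perm_eq (filter (fun d => 3 %| d)%N (divisors (3 * k))) (map (muln 3) (divisors k)).
Proof.
move=> k0; apply: uniq_perm.
- by rewrite filter_uniq // divisors_uniq.
- by rewrite map_inj_uniq ?divisors_uniq //; by move=> a b /eqP; rewrite eqn_pmul2l // => /eqP.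
move=> x; rewrite mem_filter -dvdn_divisors ?muln_gt0 //.
apply/idP/idP.
- move=> /andP[x3 xd]; apply/mapP; exists (x %/ 3)%N; last by rewrite mulnC divnK.
  rewrite -dvdn_divisors //; move: xd; rewrite -{1}(divnK x3) mulnC dvdn_pmul2l //.
- move=> /mapP[e]; rewrite -dvdn_divisors // => ek ->.
  by rewrite dvdn_mulr // dvdn_pmul2l.
Qed.

Lemma P1 n : (n %% 4 = 1)%N -> 0 < sig_chi2 n + 6 * sig_chi2_3 n.
Proof.
move=> n4; have on : odd n by have := modn2 n; case: (odd n) => /= ?; lia.
rewrite /sig_chi2_3; case: ifP => n3; last by rewrite mulr0 addr0; apply: Ppos.
set k := (n %/ 3)%N.
have ek : n = (3 * k)%N by rewrite mulnC divnK.
have k0 : (0 < k)%N by move: ek n4; clear; lia.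
have ok : odd k by move: on; rewrite ek oddM => /andP[].
have k4 : (k %% 4 = 3)%N by move: n4; rewrite ek; lia.
have T : - Rn n <= \sum_(d <- divisors n | ~~ (3 %| d)%N) kron_m1 d * (d%:Z)^+2.
  rewrite /Rn -sumrN big_mkcond [X in _ <= X]big_mkcond /=; apply: ler_sum => d _.
  have h0 : 0 <= (d%:Z)^+2 by apply: exprn_ge0.
  case: (boolP (3 %| d)%N) => d3 /=.
    by case: ifP => _; lra.
  have dn : d != n by apply/negP => /eqP e; move: d3; rewrite e n3.
  by rewrite dn; apply: kron_abs.
have E : \sum_(d <- divisors n | (3 %| d)%N) kron_m1 d * (d%:Z)^+2 = - 9 * sig_chi2 k.
  rewrite -big_filter {1}ek (perm_big _ (split3 _ k0)) big_map /sig_chi2 mulr_sumr.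
  rewrite big_seq [X in _ = X]big_seq; apply: eq_bigr => e.
  rewrite -dvdn_divisors // => ekk.
  have oe : odd e by move: ok; rewrite -(divnK ekk) oddM => /andP[].
  rewrite kron3 // PoszM; ring.
have := Pneg _ ok k4; have := R_bound _ ok; have := R_bound _ on.
rewrite [sig_chi2 n]/sig_chi2 (bigID (fun d => 3 %| d)%N) /= E.
have nk : (n%:Z)^+2 = 9 * (k%:Z)^+2 by rewrite ek PoszM; ring.
rewrite nk; move: T; set T := \sum_(_ <- _ | _) _; lra.
Qed.

Theorem lemma5p2 :
  (forall n : nat, (n %% 4 = 1)%N -> 0 < sig_chi2 n + 6 * sig_chi2_3 n) /\
  (forall n : nat, Num.sg (coefA (4 * n + 1)) = if (3 %| n)%N then 1 else -1).
Proof.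
split; first exact: P1.
move=> n; rewrite /coefA.
have o : odd (4 * n + 1) by rewrite addn1 /= oddM.
have m4 : ((4 * n + 1) %% 4 = 1)%N by lia.
have -> : (4 * n + 1 == 0)%N = false by rewrite addn1.
have sp := Ppos _ o m4.
have [h|[h|h]] : (n %% 3 = 0 \/ n %% 3 = 1 \/ n %% 3 = 2)%N by lia.
- have -> : ((4 * n + 1) %% 12 = 1)%N by lia.
  rewrite /dvdn h /=; apply: gtr0_sg; by rewrite ltr0z.
- have -> : ((4 * n + 1) %% 12 = 5)%N by lia.
  rewrite /dvdn h /=; apply: ltr0_sg.
  have : 0 < (sig_chi2 (4 * n + 1))%:~R :> rat by rewrite ltr0z.
  lra.
- have -> : ((4 * n + 1) %% 12 = 9)%N by lia.
  rewrite /dvdn h /=; apply: ltr0_sg.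
  have : 0 < (sig_chi2 (4 * n + 1) + 6 * sig_chi2_3 (4 * n + 1))%:~R :> rat.
    by rewrite ltr0z; apply: P1.
  lra.
Qed.
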